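(* For non-negative integers $l,m$ and sufficiently large odd primes $r$ define $$H_{l,m}(r)=\frac{\left(\frac{r-1}{2}\right)!}{\left(\frac{r-1}{2}-l+m\right)!}\,(-1)^{m+1}\,\sigma_m\!\left(1,2,\dots,\tfrac{r-1}{2}-l+m-1\right).$$ Then $H_{l,m}$ is a Fermat function, and its residue $g'_{l,m}$ lies in $\mathbb{Z}_{(m+2)}[\frac12]$.
   Context: $\sigma_j(x_1,\dots,x_k)$ is the $j$-th elementary symmetric polynomial, $\sigma_0=1$. $\mathbb{Z}_{(m)}=\mathbb{Z}[\frac12,\dots,\frac1{m-1}]$ for $m\ge3$ and $\mathbb{Z}_{(m)}=\mathbb{Z}$ for $m\le2$. A function $f$ assigning to each sufficiently large prime $r$ a rational number $f(r)$ lying in the $r$-adic integers is called a Fermat function if there is a rational number $\lambda$ with $f(r)\equiv \lambda\pmod r$ (i.e. same first $r$-adic digit) for all sufficiently large primes $r$; such $\lambda$ is unique and is called the residue of $f$. *)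

(* Defs.v *)
From HB Require Import structures.
From mathcomp Require Import all_boot all_order all_algebra.
Set Implicit Arguments. Unset Strict Implicit. Unset Printing Implicit Defensive.
Import Order.TTheory GRing.Theory Num.Theory.
Local Open Scope ring_scope.

Definition esym (s : seq rat) (j : nat) : rat :=
  \sum_(I : {set 'I_(size s)} | #|I| == j) \prod_(i in I) s`_i.

(* q lies in the r-adic integers: r does not divide the (reduced) denominator. *)
Definition radic_int (r : nat) (q : rat) : Prop := ~~ (r%:Z %| denq q)%Z.

(* a = b (mod r) for r-adic integers a, b: r divides the numerator of a - b. *)
Definition congr_mod (r : nat) (a b : rat) : Prop := (r%:Z %| numq (a - b))%Z.

Definition fermat_residue (f : nat -> rat) (lam : rat) : Prop :=
  exists N : nat, forall r : nat, prime r -> (N <= r)%N ->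
    radic_int r (f r) /\ congr_mod r (f r) lam.

Definition is_fermat (f : nat -> rat) : Prop := exists lam, fermat_residue f lam.

(* Z_(m) = Z[1/2,...,1/(m-1)] for m >= 3, and Z for m <= 2. *)
Definition Zloc (m : nat) (q : rat) : Prop :=
  if (3 <= m)%N then exists (a : int) (k : nat), q = a%:~R / (((m.-1)`!)%:R ^+ k)
  else exists a : int, q = a%:~R.

Definition Zloc_half (m : nat) (q : rat) : Prop :=
  exists (x : rat) (j : nat), Zloc m x /\ q = x / (2%:R ^+ j).

(* H_{l,m}(r), with (r-1)/2 = r./2 for odd r. *)
Definition H (l m r : nat) : rat :=
  let n := r./2 in
  let k := (n + m - l)%N in
  (n`!)%:R / (k`!)%:R * (-1) ^+ m.+1 * esym [seq i%:R | i <- iota 1 k.-1] m.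

(* Main.v *)
Require Import Defs.
From HB Require Import structures.
From mathcomp Require Import all_boot all_order all_algebra all_field ring zify.
Set Implicit Arguments. Unset Strict Implicit. Unset Printing Implicit Defensive.
Import Order.TTheory GRing.Theory Num.Theory.
Local Open Scope ring_scope.


Fixpoint en (N a : nat) : nat :=
  match N with
  | 0 => (a == 0%N : nat)
  | N'.+1 => match a with 0 => 1%N | a'.+1 => (en N' a'.+1 + N'.+1 * en N' a')%N end
  end.

Lemma en0 N : en N 0 = 1%N. Proof. by case: N. Qed.

Lemma en_big N a : (N < a)%N -> en N a = 0%N.
Proof.
elim: N a => [|N IH] [|a] //= H.
by rewrite !IH ?muln0 // ltnW.
Qed.

Definition Pr (R : comNzRingType) (N : nat) : {poly R} :=
  \prod_(i <- iota 1 N) ('X - (i%:R)%:P).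

Lemma PrS (R : comNzRingType) N : Pr R N.+1 = Pr R N * ('X - (N.+1%:R)%:P).
Proof. by rewrite /Pr -(addn1 N) iotaD big_cat big_seq1 add1n addn1. Qed.

Lemma coefPrS (R : comNzRingType) N j :
  (Pr R N.+1)`_j = (if j == 0%N then 0 else (Pr R N)`_j.-1) - (Pr R N)`_j * N.+1%:R.
Proof. by rewrite PrS mulrBr coefB coefMX coefMC. Qed.

Lemma sizePr (R : comNzRingType) N : size (Pr R N) = N.+1.
Proof. by rewrite /Pr size_prod_XsubC size_iota. Qed.

Lemma coefPr (R : comNzRingType) N a : (a <= N)%N ->
  (Pr R N)`_(N - a) = (-1) ^+ a * (en N a)%:R.
Proof.
elim: N a => [|N IH] a.
  by rewrite leqn0 => /eqP ->; rewrite /Pr /= big_nil coefC /= expr0 mul1r.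
case: a => [|a] Ha.
  have := IH 0%N (leq0n _); rewrite subn0 en0 expr0 mul1r => E0.
  rewrite subn0 coefPrS /= E0.
  by rewrite nth_default ?sizePr // mul0r subr0.
rewrite subSS coefPrS.
have [Na0|Na] := eqVneq (N - a)%N 0%N.
  have aN : a = N by apply/eqP; rewrite eqn_leq -ltnS Ha /= -subn_eq0 Na0.
  rewrite Na0.
  have := IH N (leqnn _); rewrite subnn => E0.
  rewrite aN /= E0 (en_big (ltnSn N)) add0n exprS natrM.
  rewrite -mulr_natl. ring.
have aN : (a < N)%N by rewrite -subn_gt0 lt0n.
have E1 := IH a.+1 aN; have E2 := IH a (ltnW aN).
rewrite -(subnSK aN) in E2 *.
rewrite /= E1 E2 exprS /= natrD natrM. ring.
Qed.

Definition Lr (N : nat) : seq rat := [seq i%:R | i <- iota 1 N].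

Lemma esymL N a : Defs.esym (Lr N) a = (en N a)%:R.
Proof.
have sz : size (Lr N) = N by rewrite size_map size_iota.
case: (leqP a N) => aN.
  have := @coef_prod_XsubC _ (Lr N) (size (Lr N) - a)%N (leq_subr _ _).
  rewrite subKn; last by rewrite sz.
  have -> : (\prod_(p <- Lr N) ('X - p%:P))`_(size (Lr N) - a) = (Pr rat N)`_(N - a).
    by rewrite sz /Lr big_map.
  rewrite coefPr // => E.
  apply: (mulfI (x := (-1) ^+ a)); first by rewrite signr_eq0.
  rewrite E /Defs.esym; congr (_ * _).
rewrite en_big // /Defs.esym big_pred0 // => I.
apply/negbTE; rewrite neq_ltn; apply/orP; left.
by apply: leq_ltn_trans (max_card _) _; rewrite card_ord sz.
Qed.

Lemma PrFp p : prime p -> Pr 'F_p p.-1 = 'X^(p.-1) - 1.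
Proof.
move=> pp.
have p0 : (0 < p)%N by apply: prime_gt0.
have perm : perm_eq [seq (i%:R : 'F_p) | i <- iota 0 p] (enum 'F_p).
  apply: uniq_perm; first 1 last.
  - by apply: enum_uniq.
  - move=> x; rewrite mem_enum; apply/mapP; exists (val x).
      by rewrite mem_iota /= add0n -{2}(Fp_cast pp) ltn_ord.
    apply: val_inj; rewrite /= val_Fp_nat // modn_small //.
    by rewrite -{2}(Fp_cast pp) ltn_ord.
  rewrite map_inj_in_uniq ?iota_uniq // => i j; rewrite !mem_iota /= !add0n => ip jp.
  move/(congr1 val); rewrite /= !val_Fp_nat // !modn_small //.
have : 'X * Pr 'F_p p.-1 = 'X * ('X^(p.-1) - 1).
  rewrite mulrBr mulr1 -exprS prednK //.
  have -> : 'X^p - 'X = \prod_x ('X - x%:P) :> {poly 'F_p}.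
    by rewrite -[X in 'X^X](card_Fp pp) finField_genPoly.
  have -> : 'X * Pr 'F_p p.-1 = \prod_(i <- iota 0 p) ('X - (i%:R)%:P).
    rewrite /Pr; case: p {pp perm} p0 => [|q] //= _.
    by rewrite big_cons subr0.
  rewrite -(big_map (fun i => (i%:R : 'F_p)) xpredT (fun x => 'X - x%:P)).
  by rewrite (perm_big _ perm) /= enumT.
by apply: mulfI; rewrite polyX_eq0.
Qed.

Lemma wilson_base p a : prime p -> (1 <= a)%N -> (a <= p - 2)%N -> (p %| en p.-1 a)%N.
Proof.
move=> pp a1 ap.
have p0 : (2 <= p)%N by apply: prime_gt1.
have ap1 : (a <= p.-1)%N by lia.
have E := @coefPr 'F_p p.-1 a ap1.
rewrite PrFp // coefB coefXn coefC in E.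
have h1 : (p.-1 - a == p.-1)%N = false by apply/eqP; lia.
have h2 : (p.-1 - a == 0)%N = false by apply/eqP; lia.
rewrite h1 h2 in E.
move: E; rewrite subr0 => /esym /eqP; rewrite mulf_eq0 signr_eq0 /=.
by rewrite (dvdn_pcharf (pchar_Fp pp)).
Qed.

Lemma wilson_ext p d a : prime p -> (1 <= a)%N -> (a <= p - 2)%N ->
  (p.-1 + d < a + p)%N -> (p %| en (p.-1 + d) a)%N.
Proof.
move=> pp; have p0 : (2 <= p)%N by apply: prime_gt1.
elim: d a => [|d IH] a a1 ap lt.
  by rewrite addn0; apply: wilson_base.
rewrite addnS; case: a a1 ap lt => [|a] // _ ap lt /=.
rewrite dvdn_add //.
  by apply: IH => //; lia.
case: a ap lt => [|a] ap lt.
  have -> : (p.-1 + d).+1 = p by lia.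
  by rewrite dvdn_mulr.
by rewrite dvdn_mull // IH //; lia.
Qed.


Definition ff (y : int) (j : nat) : int := \prod_(i < j) (y - i%:Z).

Lemma ff0 y : ff y 0 = 1. Proof. by rewrite /ff big_ord0. Qed.

Lemma ffS y j : ff y j.+1 = ff y j * (y - j%:Z).
Proof. by rewrite /ff big_ord_recr. Qed.

Lemma ffSl y j : ff (y + 1) j.+1 = (y + 1) * ff y j.
Proof.
rewrite /ff big_ord_recl subr0; congr (_ * _); apply: eq_bigr => i _.
rewrite /= /bump /= add1n. lia.
Qed.

Lemma ff_add y a b : ff y (a + b) = ff y a * ff (y - a%:Z) b.
Proof.
elim: b => [|b IH]; first by rewrite addn0 ff0 mulr1.
by rewrite addnS !ffS IH -mulrA PoszD opprD addrA.
Qed.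

Lemma ff_small (y j : nat) : (y < j)%N -> ff y%:Z j = 0.
Proof.
elim: j => [|j IH] //; rewrite ltnS leq_eqVlt => /orP [/eqP ->|lt].
  by rewrite ffS subrr mulr0.
by rewrite ffS IH // mul0r.
Qed.

Lemma ff_fact (y a : nat) : (a <= y)%N -> (y`!)%:Z = ff y%:Z a * ((y - a)`!)%:Z.
Proof.
elim: a => [|a IH] ay; first by rewrite ff0 mul1r subn0.
have ay' : (a <= y)%N by apply: ltnW.
rewrite ffS (IH ay') -mulrA.
have -> : (y - a = (y - a.+1).+1)%N by lia.
rewrite factS PoszM.
have -> : ((y - a.+1).+1)%:Z = y%:Z - a%:Z by lia.
by [].
Qed.

Fixpoint E (m k : nat) : int :=
  match m with
  | 0 => (k == 0%N)%:Z
  | m'.+1 => (k.+1)%:Z * E m' k +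
      (if k is k'.+1 then (((2 * m').+1)%:Z - k%:Z) * E m' k' else 0)
  end.

Lemma E_big m k : (m < k)%N -> E m k = 0.
Proof.
elim: m k => [|m IH] [|k] //= lt.
rewrite !IH ?mulr0 ?addr0 //; lia.
Qed.

Lemma E_S m k : E m.+1 k.+1 = (k.+2)%:Z * E m k.+1 + (((2 * m).+1)%:Z - k.+1%:Z) * E m k.
Proof. by []. Qed.

Lemma E_S0 m : E m.+1 0 = E m 0.
Proof. by rewrite /= mul1r addr0. Qed.

Lemma E_diag m : E m.+1 m.+1 = 0.
Proof.
elim: m => [|m IH]; first by [].
by rewrite E_S E_big // IH !mulr0 addr0.
Qed.


Lemma t1 y j : ff (y + 1) j.+1 - ff y j.+1 = j.+1%:Z * ff y j.
Proof. rewrite ffSl ffS intS. ring. Qed.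

Lemma t2 y k M : k.+1%:Z * ff y (2 * M).+1 + ((2 * M).+1%:Z - k.+1%:Z) * ff (y + 1) (2 * M).+1
   = (2 * M).+1%:Z * (y - k%:Z) * ff y (2 * M).
Proof. rewrite ffSl ffS !intS. ring. Qed.

Lemma eul_base m K : (K <= 1)%N ->
  ((2 * m)`!)%:Z * (en K.-1 m)%:Z = \sum_(0 <= k < m.+1) E m k * ff (K%:Z + k%:Z) (2 * m).
Proof.
move=> K1; have -> : K.-1 = 0%N by lia.
case: m => [|M]; first by rewrite big_nat1 /= ff0 !mul1r.
rewrite [en 0 _]/= mulr0 big_nat_recr // E_diag mul0r.
rewrite big1_seq; first by [].
move=> k; rewrite mem_iota add0n /= => kM.
rewrite -PoszD ff_small ?mulr0 //; lia.
Qed.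

Lemma EE M k : E M.+1 k = k.+1%:Z * E M k +
   (if k is k'.+1 then ((2 * M).+1%:Z - k%:Z) * E M k' else 0).
Proof. by []. Qed.

Lemma eul_H2 x M :
  \sum_(0 <= k < M.+2) E M.+1 k * ff (x.+1%:Z + k%:Z) (2 * M).+1
  = (2 * M).+1%:Z * x.+1%:Z * \sum_(0 <= k < M.+1) E M k * ff (x.+1%:Z + k%:Z) (2 * M).
Proof.
under eq_bigr => k _ do rewrite EE mulrDl.
rewrite big_split /= big_nat_recr //= E_big // mulr0 mul0r addr0.
rewrite [X in _ + X = _]big_nat_recl //= mul0r add0r -big_split mulr_sumr /=.
apply: eq_bigr => k _.
have -> : x.+1%:Z + k.+1%:Z = (x.+1%:Z + k%:Z) + 1 by lia.
set y := x.+1%:Z + k%:Z.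
transitivity (E M k * (k.+1%:Z * ff y (2 * M).+1 +
   ((2 * M).+1%:Z - k.+1%:Z) * ff (y + 1) (2 * M).+1)); first ring.
rewrite t2.
have -> : y - k%:Z = x.+1%:Z by rewrite /y; ring.
ring.
Qed.

Lemma eul_step x M :
  (forall m, ((2 * m)`!)%:Z * (en x m)%:Z
     = \sum_(0 <= k < m.+1) E m k * ff (x.+1%:Z + k%:Z) (2 * m)) ->
  ((2 * M.+1)`!)%:Z * (en x.+1 M.+1)%:Z
     = \sum_(0 <= k < M.+2) E M.+1 k * ff (x.+2%:Z + k%:Z) (2 * M.+1).
Proof.
move=> IH.
have IH1 := IH M.+1; have IH0 := IH M.
have e2 : (2 * M.+1 = (2 * M).+2)%N by lia.
rewrite e2 in IH1 *.
have -> : en x.+1 M.+1 = (en x M.+1 + x.+1 * en x M)%N by [].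
rewrite PoszD PoszM mulrDr IH1.
have -> : ((2 * M).+2`!)%:Z * (x.+1%:Z * (en x M)%:Z)
   = (2 * M).+2%:Z * (2 * M).+1%:Z * x.+1%:Z * (((2 * M)`!)%:Z * (en x M)%:Z).
  rewrite !factS !PoszM; ring.
rewrite IH0.
set S1 := \sum_(0 <= k < M.+2) _.
set S2 := \sum_(0 <= k < M.+1) _.
set S3 := \sum_(0 <= k < M.+2) _.
have H1 : S3 - S1 = (2 * M).+2%:Z * \sum_(0 <= k < M.+2) E M.+1 k * ff (x.+1%:Z + k%:Z) (2 * M).+1.
  rewrite /S3 /S1 -sumrB mulr_sumr; apply: eq_bigr => k _.
  have -> : x.+2%:Z + k%:Z = (x.+1%:Z + k%:Z) + 1 by lia.
  rewrite -mulrBr t1; ring.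
rewrite eul_H2 in H1.
rewrite -[S3](subrK S1) H1; ring.
Qed.

Lemma eulerian m K : ((2 * m)`!)%:Z * (en K.-1 m)%:Z =
  \sum_(0 <= k < m.+1) E m k * ff (K%:Z + k%:Z) (2 * m).
Proof.
case: K => [|K]; first exact: eul_base.
elim: K m => [|x IH] m; first exact: eul_base.
case: m => [|M]; first by rewrite big_nat1 en0 ff0.
exact: eul_step.
Qed.


Definition Sfun (l m : nat) (n : int) : int :=
  \sum_(0 <= k < m.+1) E m k * ff (n + (m%:Z - l%:Z) + k%:Z) k * ff n (l + m - k).

Lemma Sfun_id l m n : (l <= n + m)%N ->
  (((n + m - l)`!)%:Z * Sfun l m n%:Z =
   (n`!)%:Z * ((2 * m)`!)%:Z * (en (n + m - l).-1 m)%:Z).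
Proof.
move=> lnm; set K := (n + m - l)%N.
have eK : n%:Z + (m%:Z - l%:Z) = K%:Z by rewrite /K; lia.
rewrite -mulrA eulerian /Sfun !mulr_sumr.
case: (leqP l m) => lm.
  have fK : (K`!)%:Z = ff K%:Z (m - l) * (n`!)%:Z.
    by rewrite (ff_fact (a := (m - l)%N)) /K; [congr (_ * (_`!)%:Z); lia | lia].
  rewrite fK.
  apply: eq_big_nat => k /andP [_ km]; rewrite ltnS in km.
  rewrite eK.
  have -> : (2 * m = k + (2 * m - k))%N by lia.
  rewrite ff_add.
  have -> : K%:Z + k%:Z - k%:Z = K%:Z by ring.
  have -> : (2 * m - k = (m - l) + (l + m - k))%N by lia.
  rewrite ff_add.
  have -> : K%:Z - (m - l)%N%:Z = n%:Z by rewrite /K; lia.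
  ring.
have fn : (n`!)%:Z = ff n%:Z (l - m) * (K`!)%:Z.
  by rewrite (ff_fact (a := (l - m)%N)) /K; [congr (_ * (_`!)%:Z); lia | lia].
rewrite fn.
apply: eq_big_nat => k /andP [_ km]; rewrite ltnS in km.
rewrite eK.
have -> : (2 * m = k + (2 * m - k))%N by lia.
rewrite ff_add.
have -> : (l + m - k = (l - m) + (2 * m - k))%N by lia.
rewrite ff_add.
have -> : K%:Z + k%:Z - k%:Z = K%:Z by ring.
have -> : n%:Z - (l - m)%N%:Z = K%:Z by rewrite /K; lia.
ring.
Qed.

Lemma Sfun_zero l m n : (n + m < l)%N -> Sfun l m n%:Z = 0.
Proof.
move=> lt; rewrite /Sfun big1_seq // => k; rewrite mem_iota /= add0n => km.
by rewrite ff_small ?mulr0 //; lia.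
Qed.

Definition ff2 (y : int) (j : nat) : int := \prod_(i < j) (y - (2 * i)%N%:Z).

Definition Sr (l m : nat) (t : int) : int :=
  \sum_(0 <= k < m.+1) E m k * ff2 (t + (2 * (m%:Z - l%:Z + k%:Z) - 1)) k * ff2 (t - 1) (l + m - k).

Lemma ff2_ff x j : ff2 (2 * x) j = 2 ^+ j * ff x j.
Proof.
rewrite /ff2 /ff.
transitivity (\prod_(i < j) (2 * (x - i%:Z))).
  by apply: eq_bigr => i _; rewrite PoszM; ring.
by rewrite big_split /= prodr_const card_ord.
Qed.

Lemma Sr_Sfun l m (n : int) : Sr l m (2 * n + 1) = 2 ^+ (l + m) * Sfun l m n.
Proof.
rewrite /Sr /Sfun mulr_sumr; apply: eq_big_nat => k /andP [_ km]; rewrite ltnS in km.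
have -> : 2 * n + 1 + (2 * (m%:Z - l%:Z + k%:Z) - 1) = 2 * (n + (m%:Z - l%:Z) + k%:Z) by ring.
have -> : 2 * n + 1 - 1 = 2 * n by ring.
rewrite !ff2_ff.
have -> : (l + m = k + (l + m - k))%N by lia.
rewrite exprD addKn; ring.
Qed.

Lemma mul_cong (r a a' b b' : int) : (r %| a - a')%Z -> (r %| b - b')%Z -> (r %| a * b - a' * b')%Z.
Proof.
move=> h1 h2.
have -> : a * b - a' * b' = (a - a') * b + a' * (b - b') by ring.
by apply: rpredD; [apply: dvdz_mulr | apply: dvdz_mull].
Qed.

Lemma ff2_cong (r c : int) j : (r %| ff2 (r + c) j - ff2 c j)%Z.
Proof.
elim: j => [|j IH]; first by rewrite /ff2 !big_ord0 subrr dvdz0.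
rewrite /ff2 !big_ord_recr /=.
apply: mul_cong => //.
have -> : r + c - (2 * j)%N%:Z - (c - (2 * j)%N%:Z) = r by ring.
exact: dvdzz.
Qed.

Lemma Sr_cong l m (r : int) : (r %| Sr l m r - Sr l m 0)%Z.
Proof.
rewrite /Sr -sumrB; apply: (big_ind (fun x => (r %| x)%Z)).
- exact: dvdz0.
- by move=> x y; apply: rpredD.
move=> k _; rewrite !add0r.
apply: mul_cong; first apply: mul_cong.
- by rewrite subrr dvdz0.
- exact: ff2_cong.
- exact: ff2_cong.
Qed.


Lemma Euclidz (r : nat) (x y : int) : prime r ->
  (r%:Z %| x * y)%Z = (r%:Z %| x)%Z || (r%:Z %| y)%Z.
Proof. by move=> pr; rewrite !dvdzE abszM /= Euclid_dvdM. Qed.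

Lemma not_dvd_num_den (r : nat) (q : rat) : prime r ->
  (r%:Z %| numq q)%Z -> ~~ (r%:Z %| denq q)%Z.
Proof.
move=> pr h1; apply/negP => h2.
have := coprime_num_den q; rewrite /coprime => /eqP g.
move: h1 h2; rewrite !dvdzE /= => h1 h2.
have : (r %| gcdn `|numq q| `|denq q|)%N by rewrite dvdn_gcd h1 h2.
by rewrite g Euclid_dvd1.
Qed.

Lemma Q1 (a d : int) (r : nat) : prime r -> d != 0 -> ~~ (r%:Z %| d)%Z ->
  radic_int r (a%:~R / d%:~R) /\ ((r%:Z %| a)%Z -> (r%:Z %| numq (a%:~R / d%:~R : rat))%Z).
Proof.
move=> pr d0 rd; set q : rat := a%:~R / d%:~R.
have E : numq q * d = a * denq q.
  apply: (@intr_inj rat); rewrite !intrM numqE /q.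
  have d0' : (d%:~R : rat) != 0 by rewrite intr_eq0.
  by field.
split.
  rewrite /radic_int; apply/negP => h.
  have : (r%:Z %| numq q * d)%Z by rewrite E; apply: dvdz_mull.
  rewrite Euclidz // (negbTE rd) orbF => hn.
  by move: (not_dvd_num_den pr hn); rewrite h.
move=> ra.
have : (r%:Z %| numq q * d)%Z by rewrite E; apply: dvdz_mulr.
by rewrite Euclidz // (negbTE rd) orbF.
Qed.

Lemma Q2 (r : nat) (x lam mu : rat) (a d : int) : prime r -> d != 0 -> ~~ (r%:Z %| d)%Z ->
  (r%:Z %| a)%Z -> x - mu = a%:~R / d%:~R -> congr_mod r x lam ->
  (r%:Z %| numq (mu - lam))%Z.
Proof.
move=> pr d0 rd ra Ex hc.
move: hc; rewrite /congr_mod => hu.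
set u := numq (x - lam) in hu; set v := denq (x - lam).
have v0 : v != 0 by rewrite /v denq_neq0.
have rv : ~~ (r%:Z %| v)%Z by apply: not_dvd_num_den.
have -> : mu - lam = (u * d - a * v)%:~R / (v * d)%:~R.
  have Eu : x - lam = u%:~R / v%:~R by rewrite /u /v divq_num_den.
  have -> : mu - lam = (x - lam) - (x - mu) by ring.
  rewrite Eu Ex !intrM intrB !intrM.
  have d0' : (d%:~R : rat) != 0 by rewrite intr_eq0.
  have v0' : (v%:~R : rat) != 0 by rewrite intr_eq0.
  clearbody u v; field; by rewrite d0' v0'.
have vd0 : v * d != 0 by rewrite mulf_neq0.
have rvd : ~~ (r%:Z %| v * d)%Z by rewrite Euclidz // negb_or rv rd.
apply: (proj2 (@Q1 (u * d - a * v) (v * d) r pr vd0 rvd)).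
apply: rpredB; [exact: dvdz_mulr hu | exact: dvdz_mulr ra].
Qed.

Lemma zero_of_many (z : rat) (N : nat) :
  (forall r, prime r -> (N <= r)%N -> (r%:Z %| numq z)%Z) -> z = 0.
Proof.
move=> h.
have [r lt pr] := prime_above (N + `|numq z|)%N.
have := h r pr (leq_trans (leq_addr _ _) (ltnW lt)).
rewrite dvdzE /= => hd.
have a0 : `|numq z|%N = 0%N.
  case: (posnP `|numq z|%N) => // pos.
  have := dvdn_leq pos hd; lia.
by apply/eqP; rewrite -numq_eq0 -absz_eq0 a0.
Qed.


Ltac slia := (repeat match goal with
  | H : context [factorial _] |- _ => clear H
  | H : is_true (prime _) |- _ => clear H
  | H : forall _, _ |- _ => clear H end); lia.

Lemma notdvd_fact p t : prime p -> (t < p)%N -> ~~ (p %| t`!)%N.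
Proof.
move=> pp; elim: t => [|t IH] lt; first by rewrite Euclid_dvd1.
rewrite factS Euclid_dvdM // negb_or (IH (ltnW lt)) andbT.
apply/negP => /(dvdn_leq (ltn0Sn _)) => h.
slia.
Qed.

Lemma fact_split p x : prime p -> (p <= x)%N -> (x < 2 * p)%N ->
  exists A, x`! = (p * A)%N /\ ~~ (p %| A)%N.
Proof.
move=> pp px x2p; have p0 := prime_gt0 pp.
have [d ed] : exists d, x = (p + d)%N by exists (x - p)%N; slia.
rewrite ed in x2p *; clear ed px.
move: x2p; elim: d => [|d IH] lt.
  exists (p.-1)`!; rewrite addn0 -{1}(prednK p0) factS prednK //; split => //.
  by apply: notdvd_fact; rewrite ?prednK //; slia.
have [A [EA nA]] := IH ltac:(slia).
exists ((p + d).+1 * A)%N; rewrite addnS factS EA; split; first by slia.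
rewrite Euclid_dvdM // negb_or nA andbT.
rewrite -addnS dvdn_addr ?dvdnn //.
by apply/negP => /(dvdn_leq (ltn0Sn _)); slia.
Qed.

Lemma fact_div (N m : nat) :
  (forall p, prime p -> (m + 2 <= p)%N -> (p <= 2 * m)%N -> (p %| N)%N) ->
  forall t, (t <= 2 * m)%N -> (t`! %| N * (m.+1)`! ^ (2 * t))%N.
Proof.
move=> hp; elim => [|t IH] tm; first by rewrite dvd1n.
have IH' := IH (ltnW tm).
case: (leqP t.+1 m.+1) => tm1.
  apply: dvdn_mull; apply: (@dvdn_trans (m.+1)`!).
    by rewrite -(bin_fact tm1) mulnCA dvdn_mulr.
  have -> : (2 * t.+1 = (2 * t + 1).+1)%N by slia.
  by rewrite expnS dvdn_mulr.
rewrite factS.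
have e : (2 * t.+1 = (2 * t) + 2)%N by slia.
rewrite e expnD mulnA.
case pt: (prime t.+1).
  have cop : coprime t.+1 t`! by rewrite prime_coprime // notdvd_fact.
  rewrite Gauss_dvd //; apply/andP; split.
    by apply: dvdn_mulr; apply: dvdn_mulr; apply: hp => //; slia.
  by apply: dvdn_mulr.
have : ~~ prime t.+1 by rewrite pt.
case/primePn => [|[d /andP [d1 dt] dd]]; first by slia.
have [b eb] := dvdnP dd.
have b1 : (1 < b)%N by move: eb dt; case: b => [|[|b]] //= -> ; slia.
rewrite eb [X in (X %| _)%N]mulnC.
apply: dvdn_mul => //.
rewrite (_ : 2 = 1 + 1)%N // expnD expn1.
have hb : (b <= m.+1)%N by clear IH IH' hp dd; nia.
have hd : (d <= m.+1)%N by clear IH IH' hp dd; nia.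
by apply: dvdn_mul; apply: dvdn_fact; rewrite ?hb ?hd; slia.
Qed.


Lemma pz (n : nat) : ((Posz n)%:~R : rat) = n%:R. Proof. by []. Qed.

Lemma dvdz_nat (p x : nat) : (p%:Z %| x%:Z)%Z = (p %| x)%N.
Proof. by rewrite dvdzE. Qed.

Lemma p_div_Sfun l m p : prime p -> (m + 2 <= p)%N -> (p <= 2 * m)%N ->
  (p%:Z %| Sfun l m (p./2)%:Z)%Z.
Proof.
move=> pp hm hM; set n := p./2.
have podd : odd p by case: (even_prime pp) => // p2; move: hm; rewrite p2; lia.
have hp2 : p = (n * 2).+1 by rewrite -{1}(odd_double_half p) podd -muln2.
have p2m : (p %| (2 * m)`!)%N by apply: dvdn_fact; rewrite prime_gt0.
case: (ltnP (n + m) l) => h; first by rewrite Sfun_zero // dvdz0.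
have id := Sfun_id h.
set K := (n + m - l)%N in id.
set S := Sfun l m n in id *.
have hn : (n < p)%N by have := hp2; lia.
case: (ltnP K p) => hK.
  have : (p%:Z %| (K`!)%:Z * S)%Z.
    by rewrite id; apply: dvdz_mulr; apply: dvdz_mull; rewrite dvdz_nat.
  by rewrite Euclidz // dvdz_nat (negbTE (notdvd_fact pp hK)).
have hK2 : (K < 2 * p)%N by rewrite /K; lia.
have [A [EA nA]] := fact_split pp hK hK2.
have [B EB] := dvdnP p2m.
have pe : (p %| en K.-1 m)%N.
  have -> : K.-1 = (p.-1 + (K.-1 - p.-1))%N by lia.
  apply: wilson_ext => //; rewrite /K; lia.
have [C EC] := dvdnP pe.
rewrite EA EB EC !PoszM in id.
have p0 : (p%:Z) != 0 by rewrite eqz_nat; have := prime_gt0 pp; lia.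
have id2 : A%:Z * S = (n`!)%:Z * B%:Z * C%:Z * p%:Z.
  apply: (mulfI p0); rewrite mulrA id; ring.
have : (p%:Z %| A%:Z * S)%Z by rewrite id2; apply: dvdz_mull; apply: dvdzz.
by rewrite Euclidz // dvdz_nat (negbTE nA).
Qed.

Lemma p_div_N l m p : prime p -> (m + 2 <= p)%N -> (p <= 2 * m)%N ->
  (p%:Z %| Sr l m 0)%Z.
Proof.
move=> pp hm hM; set n := p./2.
have podd : odd p by case: (even_prime pp) => // p2; move: hm; rewrite p2; lia.
have hp2 : p = (n * 2).+1 by rewrite -{1}(odd_double_half p) podd -muln2.
have pz2 : p%:Z = 2 * n%:Z + 1 by rewrite {1}hp2; lia.
have h1 := Sr_cong l m p%:Z.
have h2 : (p%:Z %| Sr l m p%:Z)%Z.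
  rewrite [X in Sr _ _ X]pz2 Sr_Sfun; apply: dvdz_mull; exact: p_div_Sfun.
have -> : Sr l m 0 = Sr l m p%:Z - (Sr l m p%:Z - Sr l m 0) by ring.
exact: rpredB.
Qed.


Definition sgn (m : nat) : int := (-1) ^+ m.+1.
Definition Dn (l m : nat) : nat := (2 ^ (l + m) * (2 * m)`!)%N.
Definition lamb (l m : nat) : rat := (sgn m * Sr l m 0)%:~R / ((Dn l m)%:Z)%:~R.

Lemma Dn_rat l m : (((Dn l m)%:Z)%:~R : rat) = 2%:R ^+ (l + m) * ((2 * m)`!)%:R.
Proof. by rewrite pz /Dn natrM natrX. Qed.

Lemma sgn_rat m : ((sgn m)%:~R : rat) = (-1) ^+ m.+1.
Proof. by rewrite /sgn rmorphXn /= rmorphN1. Qed.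

Lemma Dn_neq0 l m : (Dn l m)%:Z != 0.
Proof. by rewrite eqz_nat /Dn muln_eq0 negb_or expn_eq0 /= -lt0n fact_gt0. Qed.

Lemma r_ndvd l m r : prime r -> (2 * (l + m) + 3 <= r)%N -> ~~ (r%:Z %| (Dn l m)%:Z)%Z.
Proof.
move=> pr hr; rewrite dvdz_nat /Dn Euclid_dvdM // Euclid_dvdX // negb_or.
apply/andP; split.
  apply/negP => /andP [/(dvdn_leq (isT : (0 < 2)%N)) h _]; lia.
by apply: notdvd_fact => //; lia.
Qed.

Lemma H_eq l m r : prime r -> (2 * (l + m) + 3 <= r)%N ->
  H l m r = (sgn m * Sr l m r%:Z)%:~R / ((Dn l m)%:Z)%:~R.
Proof.
move=> pr hr; rewrite /H; cbv zeta.
set n := r./2.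
have rodd : odd r by case: (even_prime pr) => // r2; move: hr; rewrite r2; lia.
have hr2 : r = (n * 2).+1 by rewrite -{1}(odd_double_half r) rodd -muln2.
have rz : r%:Z = 2 * n%:Z + 1 by rewrite {1}hr2; lia.
have hl : (l <= n + m)%N by lia.
have := esymL (n + m - l).-1 m; rewrite /Lr => ->.
have id := Sfun_id hl.
have idq := congr1 (fun z : int => (z%:~R : rat)) id.
rewrite /= !intrM !pz in idq.
rewrite rz Sr_Sfun intrM sgn_rat intrM rmorphXn /= Dn_rat.
have f1 : ((n + m - l)`!)%:R != 0 :> rat by rewrite pnatr_eq0 -lt0n fact_gt0.
have f2 : ((2 * m)`!)%:R != 0 :> rat by rewrite pnatr_eq0 -lt0n fact_gt0.
have f3 : (2%:R ^+ (l + m)) != 0 :> rat by rewrite expf_neq0 // pnatr_eq0.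
set S := (Sfun l m n)%:~R in idq *.
have -> : S = ((n`!)%:R * ((2 * m)`!)%:R * (en (n + m - l).-1 m)%:R) / ((n + m - l)`!)%:R.
  by rewrite -idq; field.
rewrite !pz; field; by rewrite ?f1 ?f2 ?f3.
Qed.



Theorem lemma2p4 (l m : nat) :
  is_fermat (H l m) /\
  forall lam : rat, fermat_residue (H l m) lam -> Zloc_half (m + 2) lam.
Proof.
have diff : forall r, prime r -> (2 * (l + m) + 3 <= r)%N ->
    H l m r - lamb l m = (sgn m * (Sr l m r%:Z - Sr l m 0))%:~R / ((Dn l m)%:Z)%:~R.
  by move=> r pr hr; rewrite H_eq // /lamb -mulrBl -raddfB /= mulrBr.
have d0 := Dn_neq0 l m.
have key : fermat_residue (H l m) (lamb l m).
  exists (2 * (l + m) + 3)%N => r pr hr.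
  have nd := r_ndvd pr hr.
  split.
    by rewrite H_eq //; exact: (proj1 (@Q1 _ _ r pr d0 nd)).
  rewrite /congr_mod diff //; apply: (proj2 (@Q1 _ _ r pr d0 nd)).
  by apply: dvdz_mull; exact: Sr_cong.
split; first by exists (lamb l m).
move=> lam [N1 h1].
have eq : lamb l m = lam.
  apply/eqP; rewrite -subr_eq0; apply/eqP.
  apply: (@zero_of_many _ (2 * (l + m) + 3 + N1)) => r pr hr.
  have [_ hc] := h1 r pr ltac:(lia).
  have hr' : (2 * (l + m) + 3 <= r)%N by lia.
  apply: (@Q2 r (H l m r) lam (lamb l m) (sgn m * (Sr l m r%:Z - Sr l m 0)) (Dn l m)
            pr d0 (r_ndvd pr hr') _ (diff r pr hr') hc).
  by apply: dvdz_mull; exact: Sr_cong.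
rewrite -eq.
have f2 : ((2 * m)`!)%:R != 0 :> rat by rewrite pnatr_eq0 -lt0n fact_gt0.
have f3 : (2%:R ^+ (l + m)) != 0 :> rat by rewrite expf_neq0 // pnatr_eq0.
exists ((sgn m * Sr l m 0)%:~R / ((2 * m)`!)%:R), (l + m)%N.
split; last by rewrite /lamb Dn_rat; field; rewrite ?f2 ?f3.
rewrite /Zloc.
case: m f2 {f3 diff d0 key eq h1} => [|M] f2.
  by exists (sgn 0 * Sr l 0 0); rewrite muln0 fact0 divr1.
rewrite (_ : (3 <= M.+1 + 2)%N = true); last by lia.
have hyp : forall p, prime p -> (M.+1 + 2 <= p)%N -> (p <= 2 * M.+1)%N ->
    (p %| `|Sr l M.+1 0|)%N.
  by move=> p pp h1 h2; have := p_div_N l pp h1 h2; rewrite dvdzE.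
have hdiv := fact_div hyp (leqnn (2 * M.+1)).
have hdz : (((2 * M.+1)`!)%:Z %| Sr l M.+1 0 * ((M.+2)`!)%:Z ^+ (2 * (2 * M.+1)))%Z.
  by rewrite dvdzE abszM abszX.
have [c hc] := dvdzP hdz.
exists (sgn M.+1 * c), (2 * (2 * M.+1))%N.
rewrite (_ : (M.+1 + 2).-1 = M.+2)%N; last by lia.
have hcq := congr1 (fun z : int => (z%:~R : rat)) hc.
rewrite /= !intrM rmorphXn /= !pz in hcq.
have f4 : ((M.+2)`!)%:R ^+ (2 * (2 * M.+1)) != 0 :> rat by rewrite expf_neq0 // pnatr_eq0 -lt0n fact_gt0.
rewrite !intrM.
set X := (Sr l M.+1 0)%:~R in hcq *.
set Y := c%:~R in hcq *.
have -> : X = Y * ((2 * M.+1)`!)%:R / ((M.+2)`!)%:R ^+ (2 * (2 * M.+1)).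
  by rewrite -hcq; field.
by field; rewrite ?f2 ?f4.
Qed.
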